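(* Let $\mathcal{S}$ be the smooth projective surface over $\mathbb{Q}$ given by the affine equations \[ (x^2+1)y^2 = (x^2+2)z^2 = 3(t^4 - 54t^2 - 117t - 243). \] Then $\mathcal{S}$ possesses a $\mathbb{Q}$-rational $0$-cycle of degree $1$.
   Context: $\mathcal{S}$ is Skorobogatov's bielliptic surface: it is the quotient of $\mathcal{C}\times\mathcal{D}$ by the diagonal action of $\mu_2=\{\pm1\}$, where $\mathcal{C}$ is the smooth projective genus one curve over $\mathbb{Q}$ with affine model $U^2 = 3(T^4-54T^2-117T-243)$, $\mathcal{D}$ is the smooth projective genus one curve over $\mathbb{Q}$ with affine model $Y^2 = X^2+1,\ Z^2 = X^2+2$, and $\mu_2$ acts by $(T,U)\mapsto (T,-U)$ on $\mathcal{C}$ and by $(X,Y,Z)\mapsto(X,-Y,-Z)$ on $\mathcal{D}$. The quotient map is given by $x=X$, $t=T$, $y=UY$, $z=UZ$. *)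

(* Defs.v *)
From HB Require Import structures.
From mathcomp Require Import all_boot all_order all_algebra all_field.
Set Implicit Arguments. Unset Strict Implicit. Unset Printing Implicit Defensive.
Import Order.TTheory GRing.Theory Num.Theory.
Local Open Scope ring_scope.

Definition quarticS (R : comNzRingType) (t : R) : R :=
  3 * (t ^+ 4 - 54 * t ^+ 2 - 117 * t - 243).

(* A point (x, y, z, t) over a field L of the affine model
     (x^2+1) y^2 = (x^2+2) z^2 = 3(t^4 - 54t^2 - 117t - 243),
   restricted to the dense open subset where the right-hand side is nonzero.
   This open subset is isomorphic to a dense open subscheme of the smooth
   projective surface S (the locus where mu_2 acts freely on C x D with
   U Y Z <> 0). *)
Definition onS0 (L : fieldType) (x y z t : L) : Prop :=
  [/\ (x ^+ 2 + 1) * y ^+ 2 = quarticS t,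
      (x ^+ 2 + 2) * z ^+ 2 = quarticS t
    & quarticS t != 0].

(* Degree over Q of the closed point underlying an L-point (x,y,z,t):
   the degree [Q(x,y,z,t) : Q] of its residue field. *)
Definition cpdeg (L : fieldExtType rat) (x y z t : L) : nat :=
  \dim <<1%VS & [:: x; y; z; t]>>%VS.

(* Main.v *)
Require Import Defs.
From HB Require Import structures.
From mathcomp Require Import all_boot all_order all_algebra all_field.
From mathcomp Require Import ring zify.
From Stdlib Require Import Classical.
Import Order.TTheory GRing.Theory Num.Theory.
Local Open Scope ring_scope.


Definition mCg {L : comNzRingType} (g : L) := g ^+ 3 + g ^+ 2 *+ 15 + g *+ 24 + 1 *+ 19.
Definition xC {L : fieldType} (g : L) : L := (- 10 - 14 * g - g ^+ 2) / 9.
Definition yC {L : fieldType} (g : L) : L := (279 + 441 * g + 108 * g ^+ 2) / 5.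
Definition zC {L : fieldType} (g : L) : L := 36 + 27 * g - 9 * g ^+ 2.
Definition tC {L : fieldType} (g : L) : L := 3 * g.

Lemma cubic_onS0 (L : fieldType) (g : L) (hchar : forall n, (n.+1%:R : L) != 0)
  (hm : mCg g = 0) : onS0 (xC g) (yC g) (zC g) (tC g).
Proof.
split.
- have key : ((- 10 - 14 * g - g ^+ 2) ^+ 2 + 81) * (279 + 441 * g + 108 * g ^+ 2) ^+ 2
     - 2025 * quarticS (3 * g) = mCg g *
    ((819 * 1000 + 234) * 1 + ((2 * 1000 + 568) * 1000 + 753) * g + ((3 * 1000 + 202) * 1000 + 11) * g ^+ 2 + ((1 * 1000 + 458) * 1000 + 81) * g ^+ 3 + (246 * 1000 + 888) * g ^+ 4 + (11 * 1000 + 664) * g ^+ 5).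
    by rewrite /mCg /quarticS; ring.
  rewrite hm mul0r in key.
  move/eqP: key; rewrite subr_eq0 => /eqP key.
  have -> : (xC g ^+ 2 + 1) * yC g ^+ 2 =
     (((- 10 - 14 * g - g ^+ 2) ^+ 2 + 81) * (279 + 441 * g + 108 * g ^+ 2) ^+ 2) / 2025.
    by rewrite /xC /yC; field; rewrite !hchar.
  by rewrite key /tC; field; rewrite !hchar.
- have key : ((- 10 - 14 * g - g ^+ 2) ^+ 2 + 162) * (36 + 27 * g - 9 * g ^+ 2) ^+ 2
     - 81 * quarticS (3 * g) = mCg g *
    ((20 * 1000 + 979) * 1 + (23 * 1000 + 895) * g + (3 * 1000 + 969) * g ^+ 2 + (- (6 * 1000 + 480)) * g ^+ 3 + 567 * g ^+ 4 + 81 * g ^+ 5).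
    by rewrite /mCg /quarticS; ring.
  rewrite hm mul0r in key.
  move/eqP: key; rewrite subr_eq0 => /eqP key.
  have -> : (xC g ^+ 2 + 2) * zC g ^+ 2 =
     (((- 10 - 14 * g - g ^+ 2) ^+ 2 + 162) * (36 + 27 * g - 9 * g ^+ 2) ^+ 2) / 81.
    by rewrite /xC /zC; field; rewrite !hchar.
  by rewrite key /tC; field; rewrite !hchar.
- have key : ((- ((1 * 1000 + 912) * 1000 + 89)) * 1 + (- ((1 * 1000 + 795) * 1000 + 485)) * g + (- (124 * 1000 + 160)) * g ^+ 2) * quarticS (3 * g)
     - 3 ^+ 4 * 11 ^+ 2 * 419 ^+ 2 = mCg g *
    ((- ((17 * 1000 + 197) * 1000 + 920)) * 1 + ((196 * 1000 + 583) * 1000 + 598) * g + ((16 * 1000 + 260) * 1000 + 345) * g ^+ 2 + (- ((30 * 1000 + 170) * 1000 + 880)) * g ^+ 3).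
    by rewrite /mCg /quarticS; ring.
  rewrite hm mul0r in key.
  move/eqP: key; rewrite subr_eq0 => /eqP key.
  have hD : (3 ^+ 4 * 11 ^+ 2 * 419 ^+ 2 : L) != 0.
    by rewrite !mulf_neq0 ?expf_neq0 ?hchar.
  apply/eqP => h0; move: hD; rewrite -key /tC h0 mulr0 eqxx.
  done.
Qed.

Definition mC : {poly rat} := 'X^3 + 'X^2 *+ 15 + 'X *+ 24 + 1 *+ 19.

Lemma size_mC : size mC = 4%N.
Proof.
rewrite /mC -addrA -addrA size_polyDl ?size_polyXn //.
apply: (leq_ltn_trans (size_polyD _ _)); rewrite gtn_max.
apply/andP; split.
  by rewrite -scaler_nat; apply: (leq_ltn_trans (size_scale_leq _ _)); rewrite size_polyXn.
apply: (leq_ltn_trans (size_polyD _ _)); rewrite gtn_max.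
apply/andP; split.
  by rewrite -scaler_nat; apply: (leq_ltn_trans (size_scale_leq _ _)); rewrite size_polyX.
by rewrite -scaler_nat; apply: (leq_ltn_trans (size_scale_leq _ _)); rewrite size_poly1.
Qed.

Lemma eval_mC (L : fieldExtType rat) (g : L) :
  (map_poly (in_alg L) mC).[g] = mCg g.
Proof.
have -> : (map_poly (in_alg L) mC).[g] = fieldExt_horner g mC by [].
rewrite /mC 3!rmorphD !rmorphMn rmorph1 !rmorphXn.
have hX : (fieldext_fieldExt_horner__canonical__GRing_RMorphism g : {poly rat} -> L) 'X = g.
  exact: fieldExt_hornerX.
by rewrite hX.
Qed.


Lemma irr_factor_Q (Q : nat -> bool)
  (HQ : forall a b, Q (a + b)%N -> Q a || Q b) (p : {poly rat}) :
  (1 < size p)%N -> Q (size p).-1 ->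
  exists f : {poly rat}, [/\ irreducible_poly f, f %| p & Q (size f).-1].
Proof.
move: {2}(size p) (leqnn (size p)) => n; elim: n p => [|n IH] p.
  by rewrite leqn0 => /eqP ->.
move=> Hs H1 HQp.
case: (classic (irreducible_poly p)) => [Hirr|Hnirr]; first by exists p.
have [q [Hq1 Hqp Hnq]] : exists q : {poly rat}, [/\ size q != 1%N, q %| p & ~~ (q %= p)].
  apply: NNPP => Hne; apply: Hnirr; split => // q Hq Hqp.
  by case: (boolP (q %= p)) => // Hn; exfalso; apply: Hne; exists q.
have p0 : p != 0 by rewrite -size_poly_gt0 ltnW.
have q0 : q != 0 by apply/eqP => q0; move: Hqp p0; rewrite q0 dvd0p => /eqP ->; rewrite eqxx.
set r := p %/ q.
have Hpr : p = r * q by rewrite divpK.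
have r0 : r != 0 by apply: contraNneq p0 => r0; rewrite Hpr r0 mul0r.
have Hsz : size p = (size r + size q).-1 by rewrite Hpr size_mul.
have sq0 : size q != 0%N by rewrite size_poly_eq0.
have sr0 : size r != 0%N by rewrite size_poly_eq0.
have sqp : size q != size p by rewrite (dvdp_size_eqp Hqp).
have sqle : (size q <= size p)%N by apply: dvdp_leq.
have sr1 : size r != 1%N.
  by apply: contra sqp => /eqP sr1; rewrite Hsz sr1.
have Hdeg : (size p).-1 = ((size r).-1 + (size q).-1)%N.
  rewrite Hsz; move: sq0 sr0; case: (size q) => // a; case: (size r) => // b _ _.
  by rewrite addnS addSn.
move: HQp; rewrite Hdeg => /HQ /orP [Hr|Hq].
  have [||f [Hf Hfr HQf]] := IH r _ _ Hr.
  - rewrite -ltnS; apply: leq_trans Hs; rewrite Hsz.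
    move: sq0 Hq1 sr0; case: (size q) => // [[|a]] // _ _; case: (size r) => // b _.
    by rewrite !addnS /= addSn ltnS leq_addr.
  - by move: sr0 sr1; case: (size r) => // [[|]].
  by exists f; split => //; rewrite Hpr dvdp_mulr.
have [||f [Hf Hfq HQf]] := IH q _ _ Hq.
- rewrite -ltnS; apply: leq_trans Hs; rewrite ltn_neqAle sqp sqle.
  done.
- by move: sq0 Hq1; case: (size q) => // [[|]].
by exists f; split => //; rewrite Hpr dvdp_mull.
Qed.


Lemma cpdeg_dvd (L : fieldExtType rat) (x y z t : L) : (cpdeg x y z t %| \dim {:L})%N.
Proof. exact: field_dimS (subvf _). Qed.

Lemma charL (L : fieldExtType rat) n : (n.+1%:R : L) != 0.
Proof. by rewrite -(rmorph_nat (in_alg L)) fmorph_eq0 pnatr_eq0. Qed.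

Definition P2 : {poly rat} := 'X^2 *+ 977 - 1 *+ 15888.

Lemma size_P2 : size P2 = 3%N.
Proof.
have h1 : size ('X^2 *+ 977 : {poly rat}) = 3%N.
  by rewrite -scaler_nat size_scale ?size_polyXn // pnatr_eq0.
have h2 : (size (1 *+ 15888 : {poly rat}) <= 1)%N.
  by rewrite -scaler_nat; apply: (leq_trans (size_scale_leq _ _)); rewrite size_poly1.
by rewrite /P2 size_polyDl h1 // size_polyN (leq_ltn_trans h2).
Qed.

Lemma eval_P2 (L : fieldExtType rat) (g : L) :
  (map_poly (in_alg L) P2).[g] = g ^+ 2 *+ 977 - 1 *+ 15888.
Proof.
have -> : (map_poly (in_alg L) P2).[g] = fieldExt_horner g P2 by [].
rewrite /P2 rmorphB !rmorphMn rmorph1 !rmorphXn.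
have hX : (fieldext_fieldExt_horner__canonical__GRing_RMorphism g : {poly rat} -> L) 'X = g.
  exact: fieldExt_hornerX.
by rewrite hX.
Qed.

Definition xQ {L : fieldType} : L := 31 / 4.
Definition zQ {L : fieldType} : L := 4.
Definition tQ {L : fieldType} : L := - 7.

Lemma quad_onS0 (L : fieldType) (w : L) (hchar : forall n, (n.+1%:R : L) != 0)
  (hw : w ^+ 2 *+ 977 - 1 *+ 15888 = 0) : onS0 xQ w zQ tQ.
Proof.
split.
- have -> : (xQ ^+ 2 + 1) * w ^+ 2 = quarticS tQ + (w ^+ 2 *+ 977 - 1 *+ 15888) / 16.
    by rewrite /xQ /tQ /quarticS; field; rewrite ?hchar.
  by rewrite hw mul0r addr0.
- by rewrite /xQ /zQ /tQ /quarticS; field; rewrite ?hchar.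
- have -> : quarticS (tQ : L) = 993 by rewrite /tQ /quarticS; ring.
  exact: hchar.
Qed.

Theorem mainTheorem1 :
  exists (n : nat) (L : 'I_n -> fieldExtType rat)
         (x y z t : forall i : 'I_n, L i) (m : 'I_n -> int),
    (forall i, onS0 (x i) (y i) (z i) (t i)) /\
    \sum_(i < n) m i * (cpdeg (x i) (y i) (z i) (t i))%:Z = 1.
Proof.
have HQodd : forall a b, odd (a + b)%N -> odd a || odd b.
  by move=> a b; rewrite oddD; case: (odd a); case: (odd b).
have := @irr_factor_Q odd HQodd mC; rewrite size_mC => /(_ isT isT) [f1 [irr1 dvd1 odd1]].
have [L1 dimL1 [g1 rt1 _]] := irredp_FAdjoin irr1.
have hm : mCg g1 = 0.
  have /dvdpP [h Hh] := dvd1.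
  by rewrite -eval_mC Hh rmorphM hornerM (rootP rt1) mulr0.
have S1 := @cubic_onS0 L1 g1 (charL L1) hm.
have d1odd : odd (cpdeg (xC g1) (yC g1) (zC g1) (tC g1)).
  by apply: (dvdn_odd (@cpdeg_dvd L1 _ _ _ _)); rewrite dimL1.
have := @irr_factor_Q (fun _ => true) (fun _ _ _ => isT) P2; rewrite size_P2 => /(_ isT isT) [f2 [irr2 dvd2 _]].
have [L2 dimL2 [w rt2 _]] := irredp_FAdjoin irr2.
have hw : w ^+ 2 *+ 977 - 1 *+ 15888 = 0.
  have /dvdpP [h Hh] := dvd2.
  by rewrite -eval_P2 Hh rmorphM hornerM (rootP rt2) mulr0.
have S2 := @quad_onS0 L2 w (charL L2) hw.
have P20 : P2 != 0 by rewrite -size_poly_gt0 size_P2.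
have hle : (size f2 <= 3)%N by rewrite -size_P2 dvdp_leq.
have hgt : (1 < size f2)%N by case: irr2.
have hd2 : (cpdeg (xQ : L2) w zQ tQ %| 2)%N.
  apply: (dvdn_trans (@cpdeg_dvd L2 _ _ _ _)); rewrite dimL2.
  by move: hle hgt; case: (size f2) => [|[|[|[|]]]].
set d1 := cpdeg (xC g1) (yC g1) (zC g1) (tC g1) in d1odd.
set d2 := cpdeg (xQ : L2) w zQ tQ in hd2.
have d2E : d2 = 1%N \/ d2 = 2%N.
  have gen : forall d, (d %| 2)%N -> d = 1%N \/ d = 2%N.
    case=> [|[|[|k]]].
    - by rewrite dvd0n.
    - by left.
    - by right.
    - by move/dvdn_leq => /(_ isT).
  exact: gen.
pose m1 : int := if d2 == 1%N then 0 else 1.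
pose m2 : int := if d2 == 1%N then 1 else - (d1./2)%:Z.
pose L := fun i : 'I_2 => if nat_of_ord i == 0%N then L1 else L2.
pose X := fun i : 'I_2 => match nat_of_ord i == 0%N as b return (if b then L1 else L2)
  with true => xC g1 | false => xQ end.
pose Y := fun i : 'I_2 => match nat_of_ord i == 0%N as b return (if b then L1 else L2)
  with true => yC g1 | false => w end.
pose Z := fun i : 'I_2 => match nat_of_ord i == 0%N as b return (if b then L1 else L2)
  with true => zC g1 | false => zQ end.
pose T := fun i : 'I_2 => match nat_of_ord i == 0%N as b return (if b then L1 else L2)
  with true => tC g1 | false => tQ end.
exists 2%N, L, X, Y, Z, T, (fun i : 'I_2 => if nat_of_ord i == 0%N then m1 else m2).
split.
  move=> i; rewrite /L /X /Y /Z /T.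
  by case: (nat_of_ord i == 0%N).
rewrite big_ord_recr big_ord_recr big_ord0 /= add0r.
rewrite -/d1 -/d2.
rewrite /m1 /m2; case: d2E => ->; rewrite /= ?mul0r ?add0r ?mul1r //.
have := odd_double_half d1; rewrite d1odd => hd.
rewrite -[in X in X + _]hd.
rewrite -mul2n.
move: (d1./2) => k.
lia.
Qed.
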